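(* Let $p,q$ be positive integers, $e\in\mathbb{R}^p$ the vector of all ones, and let $(z,w)\in\mathbb{R}^p\times\mathbb{R}^q$ satisfy $z^+\not\ge\|w\|e$ and $\langle z^-,e\rangle<\|w\|$. For $\lambda\ge0$ let $N(\lambda):=\operatorname{diag}\big(-\operatorname{sgn}([(\lambda+1)z-\|w\|e]^-)\big)$. Given $\lambda_0>0$, define the sequence $\{\lambda_k\}$ by $N_k:=N(\lambda_k)$ and $$\big[-\|w\|+\langle e,N_kz\rangle\big]\lambda_{k+1}=-\langle e,N_k[z-\|w\|e]\rangle,\qquad k=0,1,\ldots.$$ Then for any $\lambda_0>0$ the sequence $\{\lambda_k\}$ is well defined and converges after at most $2^p$ steps to the unique solution $\lambda_*>0$ of the equation $$\lambda\|w\|=\left\langle e,[(\lambda+1)z-\|w\|e]^-\right\rangle.$$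
   Context: For $\alpha\in\mathbb{R}$, $\alpha^+:=\max(\alpha,0)$ and $\alpha^-:=\max(-\alpha,0)$; for vectors $z^+$, $z^-$ and $\operatorname{sgn}(z)$ are taken componentwise (with $\operatorname{sgn}(0)=0$), and $\operatorname{diag}(z)$ is the diagonal matrix with diagonal $z_1,\dots,z_p$. The order $\ge$ is componentwise; $z^+\not\ge\|w\|e$ means that $z^+\ge\|w\|e$ fails. (This sequence is the semi-smooth Newton method for the convex piecewise linear function $\psi(\lambda)=-\lambda\|w\|+\langle e,[(\lambda+1)z-\|w\|e]^-\rangle$.) *)

(* Defs.v *)
From HB Require Import structures.
From mathcomp Require Import all_boot all_order all_algebra.
From mathcomp Require Import reals.
Set Implicit Arguments. Unset Strict Implicit. Unset Printing Implicit Defensive.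
Import Order.TTheory GRing.Theory Num.Theory.
Local Open Scope ring_scope.

Section Defs.
Variable R : realType.

Definition posp (a : R) : R := Num.max a 0.
Definition negp (a : R) : R := Num.max (- a) 0.

Definition vpos n (z : 'cV[R]_n) : 'cV[R]_n := map_mx posp z.
Definition vneg n (z : 'cV[R]_n) : 'cV[R]_n := map_mx negp z.
Definition vsgn n (z : 'cV[R]_n) : 'cV[R]_n := map_mx (fun a => Num.sg a) z.

Definition onesv n : 'cV[R]_n := const_mx 1.

Definition dotv n (u v : 'cV[R]_n) : R := \sum_(i < n) u i 0 * v i 0.
Definition enorm n (w : 'cV[R]_n) : R := Num.sqrt (dotv w w).

Definition diagv n (z : 'cV[R]_n) : 'M[R]_n := diag_mx z^T.

(* N(lambda) = diag(- sgn([(lambda+1) z - c e]^-)), with c = ||w|| *)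
Definition Nmat p (z : 'cV[R]_p) (c lam : R) : 'M[R]_p :=
  diagv (- vsgn (vneg ((lam + 1) *: z - c *: onesv p))).

Definition ncoef p (z : 'cV[R]_p) (c lam : R) : R :=
  - c + dotv (onesv p) (Nmat z c lam *m z).

Definition nrhs p (z : 'cV[R]_p) (c lam : R) : R :=
  - dotv (onesv p) (Nmat z c lam *m (z - c *: onesv p)).

(* the sequence lambda_k: lambda_{k+1} = rhs / coef (well defined when coef <> 0) *)
Fixpoint newton_seq p (z : 'cV[R]_p) (c lam0 : R) (k : nat) : R :=
  match k with
  | O => lam0
  | S k' => let l := newton_seq z c lam0 k' in nrhs z c l / ncoef z c l
  end.

End Defs.

(* Main.v *)
Require Import Defs.
From HB Require Import structures.
From mathcomp Require Import all_boot all_order all_algebra.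
From mathcomp Require Import reals ring lra.
Import Order.TTheory GRing.Theory Num.Theory.
Set Implicit Arguments. Unset Strict Implicit.
Local Open Scope ring_scope.

Section Aux.
Variable R : realType.
Variable p : nat.
Variable z : 'cV[R]_p.
Variable c : R.

Definition act (l : R) : pred 'I_p := fun i => (l + 1) * z i 0 < c.
Definition sl (S : pred 'I_p) : R := - c - \sum_(i | S i) z i 0.
Definition al (S : pred 'I_p) : R := \sum_(i | S i) (c - z i 0).
Definition GG (l : R) : R := \sum_(i | act l i) (c - (l + 1) * z i 0) - l * c.
Definition LL (S : pred 'I_p) (l : R) : R := \sum_(i | S i) (c - (l + 1) * z i 0) - l * c.

Lemma negpE (x : R) : negp x = if x < 0 then - x else 0.
Proof.
rewrite /negp; case: ltrP => hx.
  by apply/max_idPl; lra.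
by apply/max_idPr; lra.
Qed.

Lemma vnegE (l : R) i :
  vneg ((l + 1) *: z - c *: onesv R p) i 0 = if act l i then c - (l + 1) * z i 0 else 0.
Proof.
rewrite /vneg !mxE negpE /act; case: ltrP => h; case: ltrP => h'; lra.
Qed.

Lemma dot1 n (u : 'cV[R]_n) : dotv (onesv R n) u = \sum_i u i 0.
Proof. by apply: eq_bigr => i _; rewrite mxE mul1r. Qed.

Lemma GE (l : R) :
  dotv (onesv R p) (vneg ((l + 1) *: z - c *: onesv R p)) = \sum_(i | act l i) (c - (l + 1) * z i 0).
Proof.
rewrite dot1 [RHS]big_mkcond; apply: eq_bigr => i _; exact: vnegE.
Qed.

Lemma NmatE (l : R) (v : 'cV[R]_p) i :
  (Nmat z c l *m v) i 0 = if act l i then - v i 0 else 0.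
Proof.
rewrite /Nmat /diagv mul_diag_mx !mxE negpE /act.
case: ltrP => h; case: ltrP => h'; try lra.
  by rewrite gtr0_sg ?mulN1r //; lra.
by rewrite sgr0 oppr0 mul0r.
Qed.

Lemma ncoefE (l : R) : ncoef z c l = sl (act l).
Proof.
rewrite /ncoef /sl dot1 (big_mkcond (act l)) /= -sumrN.
congr (_ + _); apply: eq_bigr => i _; rewrite NmatE; case: (act l i) => //.
by rewrite oppr0.
Qed.

Lemma nrhsE (l : R) : nrhs z c l = - al (act l).
Proof.
rewrite /nrhs /al dot1 (big_mkcond (act l)) /=.
congr (- _); apply: eq_bigr => i _; rewrite NmatE; case: (act l i) => //.
by rewrite !mxE; lra.
Qed.

Lemma LLE S l : LL S l = al S + l * sl S.
Proof.
rewrite /LL /al /sl.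
have -> : \sum_(i | S i) (c - (l + 1) * z i 0) =
   \sum_(i | S i) (c - z i 0) - l * \sum_(i | S i) z i 0.
  by rewrite mulr_sumr -sumrB; apply: eq_bigr => i _; ring.
ring.
Qed.

Hypothesis hc : 0 < c.
Hypothesis hsl : forall S, sl S < 0.

Definition FF l := - al (act l) / sl (act l).

Lemma GLL S l : LL S l <= GG l.
Proof.
rewrite /LL /GG lerD2r (big_mkcond S) (big_mkcond (act l)) /=.
apply: ler_sum => i _; rewrite /act; case: (S i); case: ltrP => h; lra.
Qed.

Lemma LL_root S : LL S (- al S / sl S) = 0.
Proof.
have h := hsl S; rewrite LLE; field; lra.
Qed.

Lemma G_F l : 0 <= GG (FF l).
Proof. rewrite -(LL_root (act l)); exact: GLL. Qed.

Lemma F_ge l : 0 <= GG l -> l <= FF l.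
Proof.
have h := hsl (act l).
rewrite /GG -/(LL (act l) l) LLE /FF => H.
rewrite -subr_ge0.
have -> : - al (act l) / sl (act l) - l = (al (act l) + l * sl (act l)) / (- sl (act l)).
  by field; lra.
apply: divr_ge0 => //; lra.
Qed.

Lemma GG_decr l m : l < m -> GG m < GG l.
Proof.
move=> hlm; have h := hsl (act m).
apply: (lt_le_trans _ (GLL (act m) l)).
rewrite /GG -/(LL (act m) m) !LLE ltrD2l.
nra.
Qed.

Lemma F_ge0 l : 0 <= l -> 0 <= FF l.
Proof.
move=> hl; have h := hsl (act l).
have ha : 0 <= al (act l).
  apply: sumr_ge0 => i; rewrite /act => hi.
  case: (ltrP (z i 0) 0) => hz.
    by rewrite subr_ge0; apply: le_trans (ltW hz) (ltW hc).
  have : 0 <= l * z i 0 by apply: mulr_ge0.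
  move: hi hz; set y := z i 0; lra.
have -> : FF l = al (act l) * (- sl (act l))^-1 by rewrite /FF invrN mulrN mulNr.
apply: divr_ge0 => //; lra.
Qed.

Lemma act_mono l m i : 0 <= l -> l <= m -> act m i -> act l i.
Proof.
rewrite /act => hl hlm hm.
move: hm; set y := z i 0 => hm.
have hc' := hc.
case: (ltrP y 0) => hz.
  have : 0 <= (l + 1) * (- y) by apply: mulr_ge0; lra.
  lra.
have : 0 <= (m - l) * y by apply: mulr_ge0; lra.
lra.
Qed.

Lemma fixed_root l : FF l = l -> GG l = 0.
Proof.
have h := hsl (act l).
rewrite /GG -/(LL (act l) l) LLE => e; rewrite -[X in X * _]e /FF; field; lra.
Qed.

Lemma FF_ext l m : act l =1 act m -> FF l = FF m.
Proof. by move=> H; rewrite /FF /al /sl !(eq_bigl _ _ H). Qed.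

End Aux.

Theorem proposition3 (R : realType) (p q : nat) (hp : (0 < p)%N) (hq : (0 < q)%N)
    (z : 'cV[R]_p) (w : 'cV[R]_q)
    (hzpos : ~ (forall i : 'I_p, enorm w <= vpos z i 0))
    (hzneg : dotv (vneg z) (@onesv R p) < enorm w)
    (lam0 : R) (hlam0 : 0 < lam0) :
  (forall k : nat,
      0 <= newton_seq z (enorm w) lam0 k /\
      ncoef z (enorm w) (newton_seq z (enorm w) lam0 k) != 0) /\
  exists lstar : R,
    [/\ 0 < lstar,
        lstar * enorm w =
          dotv (@onesv R p) (vneg ((lstar + 1) *: z - enorm w *: @onesv R p)),
        (forall l : R, 0 < l ->
           l * enorm w = dotv (@onesv R p) (vneg ((l + 1) *: z - enorm w *: @onesv R p)) ->
           l = lstar)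
      & forall k : nat, (2 ^ p <= k)%N -> newton_seq z (enorm w) lam0 k = lstar].
Proof.
set c := enorm w.
have hc : 0 < c.
  case: (ltrP 0 c) => // hc0; exfalso; apply: hzpos => i.
  by apply: le_trans hc0 _; rewrite mxE /posp le_max lexx orbT.
have [i0 hi0] : exists i0, z i0 0 < c.
  case: (boolP [forall i, c <= vpos z i 0]) => [/forallP H|].
    by exfalso; apply: hzpos.
  rewrite negb_forall => /existsP [i hi]; exists i.
  move: hi; rewrite -ltNge mxE /posp gt_max => /andP [] //.
have hsl : forall S, sl z c S < 0.
  move=> S; rewrite /sl.
  have : \sum_(i | S i) - z i 0 <= dotv (vneg z) (onesv R p).
    rewrite big_mkcond /=; apply: ler_sum => i _.
    rewrite !mxE mulr1 negpE; case: (S i); case: ltrP => h; lra.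
  rewrite sumrN; move: hzneg; rewrite -/c; lra.
set lam := newton_seq z c lam0.
have lamS : forall k, lam k.+1 = FF z c (lam k).
  by move=> k; rewrite /lam /= nrhsE ncoefE.
have lam_ge0 : forall k, 0 <= lam k.
  elim=> [|k IH]; first by rewrite /lam /=; lra.
  by rewrite lamS; apply: F_ge0.
split.
  move=> k; split; first exact: lam_ge0.
  by rewrite ncoefE; apply: ltr0_neq0.
have G_ge : forall k, 0 <= GG z c (lam k.+1).
  by move=> k; rewrite lamS; apply: G_F.
have mono : forall k, lam k.+1 <= lam k.+2.
  by move=> k; rewrite [lam k.+2]lamS; apply: F_ge.
pose fixed k := FF z c (lam k) = lam k.
have fixS : forall k, fixed k -> fixed k.+1.
  move=> k fk; rewrite /fixed lamS fk; exact: fk.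
have meas : forall k, fixed k.+1 \/ (#|act z c (lam k.+1)| + k.+1 <= p.+1)%N.
  elim=> [|k IH].
    by right; rewrite addn1 ltnS; apply: leq_trans (max_card _) _; rewrite card_ord.
  case: IH => [fk|hk]; first by left; apply: fixS.
  have sub : act z c (lam k.+2) \subset act z c (lam k.+1).
    apply/subsetP => i; rewrite !unfold_in => H; exact: (act_mono hc (lam_ge0 k.+1) (mono k) H).
  have := subset_leq_card sub; rewrite leq_eqVlt => /orP [/eqP e|lt].
    left; rewrite /fixed [in RHS]lamS; apply: FF_ext => i.
    by move: (subset_cardP e sub) => /(_ i); rewrite !unfold_in.
  by right; rewrite addnS; apply: leq_trans hk; rewrite ltn_add2r.
have fixp : fixed p.+1.
  case: (meas p) => // h.
  have h0 : #|act z c (lam p.+1)| = 0%N.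
    by apply/eqP; rewrite -leqn0 -(leq_add2r p.+1).
  have F0 : FF z c (lam p.+1) = 0.
    rewrite /FF /al big_pred0; first by rewrite oppr0 mul0r.
    by move=> i; have := card0_eq h0 i; rewrite !unfold_in.
  have := mono p; rewrite [lam p.+2]lamS F0 => hle.
  have := lam_ge0 p.+1 => hge.
  rewrite /fixed F0; apply/eqP; rewrite eq_le hle hge //.
have fixn : forall n, fixed (p.+1 + n)%N /\ lam (p.+1 + n)%N = lam p.+1.
  elim=> [|n [fn IH]]; first by rewrite addn0.
  rewrite addnS; split; first exact: fixS.
  by rewrite lamS fn.
have fixall : forall k, (p.+1 <= k)%N -> lam k = lam p.+1.
  by move=> k hk; rewrite -(subnKC hk); case: (fixn (k - p.+1)%N).
set lstar := lam p.+1.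
have Gstar : GG z c lstar = 0 by apply: fixed_root.
have G0 : 0 < GG z c 0.
  rewrite /GG mul0r subr0 (bigD1 i0) /=; last by rewrite /act add0r mul1r.
  rewrite add0r mul1r; apply: ltr_pwDl; first lra.
  apply: sumr_ge0 => i /andP [hi _]; move: hi; rewrite /act; lra.
have Geq : forall l, (l * c = dotv (onesv R p) (vneg ((l + 1) *: z - c *: onesv R p))) <-> GG z c l = 0.
  move=> l; rewrite GE /GG; split => h; lra.
exists lstar; split.
- have := lam_ge0 p.+1; rewrite -/lstar le_eqVlt => /orP [/eqP e|//].
  by rewrite -e in Gstar; move: G0; rewrite Gstar ltxx.
- by apply/Geq.
- move=> l hl /Geq hG.
  case: (ltgtP l lstar) => // h.
    by have := GG_decr hsl h; rewrite hG Gstar ltxx.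
  by have := GG_decr hsl h; rewrite hG Gstar ltxx.
- move=> k hk; apply: fixall; apply: leq_trans hk.
  exact: ltn_expl.
Qed.
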